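(* Let $\mathbf{x}=(\mathbf{x}_1,\dots,\mathbf{x}_n)$ and $\mathbf{y}=(\mathbf{y}_1,\dots,\mathbf{y}_n)$ be Generalized Nash equilibria of $G^{(2)}$ such that $\mathbf{x}_T^{(j)}\le\mathbf{y}_T^{(j)}$ for all $j\in[m]$. Then: (1) if $i\in\mathcal{T}_I(\mathbf{x})$, then $J_{\mathbf{y}_{-i}}\subset J_{\mathbf{x}_{-i}}$; (2) $\mathcal{T}_I(\mathbf{x})\subset\mathcal{T}_I(\mathbf{y})$.
   Context: $G^{(2)}$ is a Fragile multi-CPR Game: $n,m\ge1$, $[k]=\{1,\dots,k\}$, $C_m=\{(x_1,\dots,x_m)\in[0,1]^m:\sum_j x_j\le1\}$, $\mathcal{C}_n=\prod_{i\in[n]}C_m$, $\mathcal{C}_{-i}=\prod_{[n]\setminus\{i\}}C_m$. A profile is $\mathbf{x}=(\mathbf{x}_1,\dots,\mathbf{x}_n)$, $\mathbf{x}_i=(x_{i1},\dots,x_{im})$; write $\mathbf{x}=(\mathbf{x}_i,\mathbf{x}_{-i})$; $\mathbf{x}_T^{(j)}=\sum_i x_{ij}$, $\mathbf{x}_T^{j|i}=\sum_{\ell\ne i}x_{\ell j}$ (similarly for $\mathbf{y}$). Each CPR $j$ has return rate $\mathcal{R}_j(t)>1$ and failure probability $p_j(t)\in[0,1]$; each player $i$ has parameters $a_i,k_i$. $\mathcal{F}_{ij}(t)=(\mathcal{R}_j(t)-1)^{a_i}(1-p_j(t))-k_ip_j(t)$; utility $\mathcal{V}_i(\mathbf{x}_i;\mathbf{x}_{-i})=\sum_j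 x_{ij}^{a_i}\mathcal{F}_{ij}(\mathbf{x}_T^{(j)})$. Assumption: (1) $p_j(0)=0$, $p_j(t)=1$ for $t\ge1$; (2) $a_i\in(0,1]$, $k_i>0$; (3) each $\mathcal{F}_{ij}$ (continuous on $[0,1]$) has strictly negative first and second derivatives on $(0,1)$. $\omega_{ij}\in(0,1)$ is the unique zero of $\mathcal{F}_{ij}$ in $(0,1)$. $A(\mathbf{x}_{-i})=\{j:\mathbf{x}_T^{j|i}<\omega_{ij}\}$. $\vartheta_i(\mathbf{x}_{-i})=C_m\cap\big(\prod_{j\in A(\mathbf{x}_{-i})}[0,\omega_{ij}-\mathbf{x}_T^{j|i}]\times\prod_{j\notin A(\mathbf{x}_{-i})}\{0\}\big)$. A Generalized Nash equilibrium is $\mathbf{x}\in\mathcal{C}_n$ with, for all $i$, $\mathbf{x}_i\in\vartheta_i(\mathbf{x}_{-i})$ and $\mathcal{V}_i(\mathbf{x}_i;\mathbf{x}_{-i})\ge\mathcal{V}_i(\mathbf{z};\mathbf{x}_{-i})$ for all $\mathbf{z}\in\vartheta_i(\mathbf{x}_{-i})$. $\psi_{ij}(x;s)=x\,\mathcal{F}_{ij}'(x+s)+a_i\mathcal{F}_{ij}(x+s)$. For a GNE $\mathbf{x}$: $J_{\mathbf{x}_{-i}}=\{j\in A(\mathbf{x}_{-i}):x_{ij}\ne0\}$; $\mathbf{x}_i$ is of Type I if $\sum_{j\in J_{\mathbf{x}_{-i}}}x_{ij}<1$ and $\psi_{ij}(x_{ij};\mathbf{x}_T^{j|i})=0$ for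 all $j\in J_{\mathbf{x}_{-i}}$; of Type II if $\sum_{j\in J_{\mathbf{x}_{-i}}}x_{ij}=1$ and there is $\kappa_0\ge0$ with $x_{ij}^{a_i-1}\psi_{ij}(x_{ij};\mathbf{x}_T^{j|i})=\kappa_0$ for all $j\in J_{\mathbf{x}_{-i}}$. $\mathcal{T}_I(\mathbf{x})=\{i\in[n]:\mathbf{x}_i\text{ is of Type I}\}$. *)

(* Defs.v *)
From HB Require Import structures.
From mathcomp Require Import all_boot all_order all_algebra.
From mathcomp Require Import all_classical all_reals all_analysis.
Set Implicit Arguments. Unset Strict Implicit. Unset Printing Implicit Defensive.
Import Order.TTheory GRing.Theory Num.Theory.
Import numFieldNormedType.Exports.
Local Open Scope classical_set_scope.
Local Open Scope ring_scope.

Record game (R : realType) (n m : nat) := Game {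
  Rrate : 'I_m -> R -> R;
  pfail : 'I_m -> R -> R;
  aexp  : 'I_n -> R;
  kpar  : 'I_n -> R;
  omega : 'I_n -> 'I_m -> R    (* omega_ij, the zero of F_ij in (0,1) *)
}.

Section Defs.
Variables (R : realType) (n m : nat) (G : game R n m).

Definition Ffun (i : 'I_n) (j : 'I_m) (t : R) : R :=
  (Rrate G j t - 1) `^ (aexp G i) * (1 - pfail G j t) - kpar G i * pfail G j t.

(* Standing assumptions of the paper, plus: omega_ij is a zero of F_ij in (0,1)
   (it is then the unique one, by strict monotonicity). *)
Definition game_assumptions : Prop :=
  (0 < n)%N /\ (0 < m)%N /\
  (forall j t, 0 <= t -> 1 < Rrate G j t) /\
  (forall j t, 0 <= t -> 0 <= pfail G j t <= 1) /\
  (forall j, pfail G j 0 = 0) /\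
  (forall j t, 1 <= t -> pfail G j t = 1) /\
  (forall i, 0 < aexp G i <= 1) /\
  (forall i, 0 < kpar G i) /\
  (forall i j, {within `[0, 1], continuous (Ffun i j)}) /\
  (forall i j t, 0 < t < 1 ->
      derivable (Ffun i j) t 1 /\ derive1 (Ffun i j) t < 0 /\
      derivable (derive1 (Ffun i j)) t 1 /\ derive1 (derive1 (Ffun i j)) t < 0) /\
  (forall i j, 0 < omega G i j < 1 /\ Ffun i j (omega G i j) = 0).

Definition profile := 'I_n -> 'I_m -> R.

Definition inCm (z : 'I_m -> R) : Prop :=
  (forall j, 0 <= z j <= 1) /\ \sum_(j < m) z j <= 1.

Definition inCn (x : profile) : Prop := forall i, inCm (x i).

Definition xT (x : profile) (j : 'I_m) : R := \sum_(i < n) x i j.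
Definition xTm (x : profile) (i : 'I_n) (j : 'I_m) : R :=
  \sum_(l < n | l != i) x l j.

Definition Vutil (i : 'I_n) (z : 'I_m -> R) (x : profile) : R :=
  \sum_(j < m) z j `^ (aexp G i) * Ffun i j (z j + xTm x i j).

Definition Aset (x : profile) (i : 'I_n) (j : 'I_m) : bool :=
  xTm x i j < omega G i j.

Definition vartheta (x : profile) (i : 'I_n) (z : 'I_m -> R) : Prop :=
  inCm z /\
  forall j, (Aset x i j -> 0 <= z j <= omega G i j - xTm x i j) /\
            (~~ Aset x i j -> z j = 0).

Definition GNE (x : profile) : Prop :=
  inCn x /\
  forall i, vartheta x i (x i) /\
    forall z, vartheta x i z -> Vutil i z x <= Vutil i (x i) x.

Definition psi (i : 'I_n) (j : 'I_m) (x s : R) : R :=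
  x * derive1 (Ffun i j) (x + s) + aexp G i * Ffun i j (x + s).

Definition Jset (x : profile) (i : 'I_n) (j : 'I_m) : bool :=
  Aset x i j && (x i j != 0).

Definition typeI (x : profile) (i : 'I_n) : Prop :=
  \sum_(j < m | Jset x i j) x i j < 1 /\
  forall j, Jset x i j -> psi i j (x i j) (xTm x i j) = 0.

Definition typeII (x : profile) (i : 'I_n) : Prop :=
  \sum_(j < m | Jset x i j) x i j = 1 /\
  exists kappa0 : R, 0 <= kappa0 /\
    forall j, Jset x i j ->
      x i j `^ (aexp G i - 1) * psi i j (x i j) (xTm x i j) = kappa0.

Definition TI (x : profile) : set 'I_n := [set i | typeI x i].

End Defs.

(* Main.v *)
Require Import Defs.
From HB Require Import structures.
From mathcomp Require Import all_boot all_order all_algebra.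
From mathcomp Require Import all_classical all_reals all_analysis.
From mathcomp Require Import ring lra.
Import Order.TTheory GRing.Theory Num.Theory.
Import numFieldNormedType.Exports.
Local Open Scope classical_set_scope.
Local Open Scope ring_scope.

Section Aux.
Variables (R : realType) (n m : nat) (G : game R n m).
Hypothesis HG : game_assumptions G.

Lemma F_cont i j : {within `[0, 1], continuous (Ffun G i j)}.
Proof. by case: HG => _ [_ [_ [_ [_ [_ [_ [_ [H _]]]]]]]]. Qed.

Lemma F_der i j t : 0 < t < 1 ->
      derivable (Ffun G i j) t 1 /\ derive1 (Ffun G i j) t < 0 /\
      derivable (derive1 (Ffun G i j)) t 1 /\ derive1 (derive1 (Ffun G i j)) t < 0.
Proof. by case: HG => _ [_ [_ [_ [_ [_ [_ [_ [_ [H _]]]]]]]]]; apply: H. Qed.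

Lemma om i j : 0 < omega G i j < 1 /\ Ffun G i j (omega G i j) = 0.
Proof. by case: HG => _ [_ [_ [_ [_ [_ [_ [_ [_ [_ H]]]]]]]]]. Qed.

Lemma a_pos i : 0 < aexp G i <= 1.
Proof. by case: HG => _ [_ [_ [_ [_ [_ [H _]]]]]]. Qed.

Lemma F_decr i j u v : 0 <= u -> u < v -> v <= 1 ->
  Ffun G i j v < Ffun G i j u.
Proof.
move=> u0 uv v1.
apply: (@ltr0_derive1_decr _ _ 0 1) => //.
- by move=> x; rewrite in_itv /= => /andP[? ?]; case: (@F_der i j x) => //; apply/andP.
- by move=> x; rewrite in_itv /= => /andP[? ?]; case: (@F_der i j x) => [|_ []//]; apply/andP.
- exact: F_cont.
Qed.

Lemma F'_decr i j u v : 0 < u -> u <= v -> v < 1 ->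
  derive1 (Ffun G i j) v <= derive1 (Ffun G i j) u.
Proof.
move=> u0; rewrite le_eqVlt => /orP[/eqP -> //|uv] v1.
have H x : u <= x <= v -> derivable (derive1 (Ffun G i j)) x 1 /\ derive1 (derive1 (Ffun G i j)) x < 0.
  move=> /andP[? ?]; have [] := @F_der i j x; last by move=> _ [] _ [].
  by apply/andP; split; [exact: lt_le_trans u0 _ | exact: le_lt_trans v1].
apply/ltW; apply: (@ltr0_derive1_decr _ _ u v) => //.
- by move=> x; rewrite in_itv /= => /andP[? ?]; have [|] := H x; rewrite ?ltW.
- by move=> x; rewrite in_itv /= => /andP[? ?]; have [|] := H x; rewrite ?ltW.
- apply: derivable_within_continuous => x; rewrite in_itv /= => ?.
  by have [|] := H x.
Qed.

Definition gfun i j s := fun t : R => t `^ aexp G i * Ffun G i j (t + s).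

Lemma g_der i j s z : 0 < z -> 0 < z + s < 1 ->
  derivable (gfun i j s) z 1 /\
  'D_1 (gfun i j s) z = z `^ (aexp G i - 1) * psi G i j z s.
Proof.
move=> z0 zs.
have /andP[a0 _] := a_pos i.
pose P := fun t : R => t `^ aexp G i.
pose Fs := Ffun G i j \o shift s.
have -> : gfun i j s = P * Fs by apply/funext => t.
have dP : derivable P z 1 by apply: derivable_powR; rewrite in_itv /= z0.
have [dF _] := @F_der i j _ zs.
have dFs : is_derive z 1 Fs ('D_1 (Ffun G i j) (z + s) * 1).
  apply: is_derive1_comp; last exact: is_derive_shift.
  exact: derivableP.
have dFs' : derivable Fs z 1 by case: dFs.
split; first exact: derivableM.
rewrite deriveM // (@derive_val _ _ _ _ _ _ _ dFs) -derive1E.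
rewrite -[X in _ + _ *: X]derive1E /P powR_derive1 ?in_itv /= ?z0 //.
rewrite /psi /Fs /= -(mulr_powRB1 (ltW z0) a0).
rewrite /GRing.scale /=. 
ring.
Qed.
Lemma left_max (f : R -> R) (a c : R) : a < c -> derivable f c 1 ->
  (forall t, a < t < c -> f t <= f c) -> 0 <= 'D_1 f c.
Proof.
move=> ac fdrvbl cmax.
rewrite ['D_1 f c]cvg_at_leftE; last exact: fdrvbl.
apply: limr_ge.
  have dfc := fdrvbl; rewrite -(cvg_at_leftE (fun h => h^-1 *: ((f \o shift c) _ - f c))) //.
  apply: cvg_trans dfc; apply: cvg_app.
  move=> A [e egt0 Ae]; exists e => // x xe xgt0; apply: Ae => //.
  exact/ltr0_neq0.
near=> h; apply: mulr_le0.
  by rewrite invr_le0; apply: ltW; near: h; exists 1 => /=.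
rewrite subr_le0 [_%:A]mulr1; apply: cmax; near: h.
exists (c - a); first by rewrite /= subr_gt0.
move=> h; rewrite /= distrC subr0.
move=> /ltr_normlP [] h1 h2 h0.
apply/andP; split; lra.
Unshelve. all: by end_near. Qed.
Definition upd (w : 'I_m -> R) j t := fun k => if k == j then t else w k.

Lemma sum_upd (w : 'I_m -> R) j t : \sum_k upd w j t k = \sum_k w k - w j + t.
Proof.
rewrite [LHS](bigD1 j) //= [X in _ = X - _ + _](bigD1 j) //= /upd eqxx.
under eq_bigr => k /negbTE -> do [].
lra.
Qed.

Lemma V_upd i (x : profile R n m) j t : Vutil G i (upd (x i) j t) x =
  Vutil G i (x i) x - gfun i j (xTm x i j) (x i j) + gfun i j (xTm x i j) t.
Proof.
rewrite /Vutil [LHS](bigD1 j) //= [X in _ = X - _ + _](bigD1 j) //= /upd eqxx.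
under eq_bigr => k /negbTE -> do [].
rewrite /gfun; lra.
Qed.

Lemma xT_split (x : profile R n m) i j : xT x j = x i j + xTm x i j.
Proof. by rewrite /xT (bigD1 i). Qed.

Lemma xTm_ge0 (x : profile R n m) i j : inCn x -> 0 <= xTm x i j.
Proof. by move=> Hx; apply: sumr_ge0 => l _; case: (Hx l) => /(_ j) /andP[]. Qed.

Lemma sumJ (x : profile R n m) i : vartheta G x i (x i) ->
  \sum_(j | Jset G x i j) x i j = \sum_j x i j.
Proof.
move=> [_ H]; rewrite big_mkcond; apply: eq_bigr => j _.
case: ifP => // /negbT; rewrite /Jset negb_and => /orP[nA|/negPn/eqP -> //].
by rewrite ((H j).2 nA).
Qed.

Lemma upd_feas (x : profile R n m) i j t : vartheta G x i (x i) -> Aset G x i j ->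
  0 <= t -> t <= omega G i j - xTm x i j -> \sum_k x i k - x i j + t <= 1 -> t <= 1 ->
  vartheta G x i (upd (x i) j t).
Proof.
move=> [[H01 Hs] HA] Aj t0 tom ts t1; split; first split.
- by move=> k; rewrite /upd; case: eqP => _; rewrite ?t0 ?t1 //; apply: H01.
- by rewrite sum_upd.
move=> k; rewrite /upd; case: eqP => [-> | _]; last exact: HA.
by split; [rewrite t0 tom | rewrite Aj].
Qed.

Section GNEfacts.
Variable x : profile R n m.
Hypothesis Hx : GNE G x.

Lemma opt_upd i j t : Aset G x i j -> 0 <= t -> t <= omega G i j - xTm x i j ->
  \sum_k x i k - x i j + t <= 1 -> t <= 1 ->
  gfun i j (xTm x i j) t <= gfun i j (xTm x i j) (x i j).
Proof.
move=> Aj t0 tom ts t1.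
have [Hv Hopt] := Hx.2 i.
have := Hopt _ (@upd_feas x i j t Hv Aj t0 tom ts t1).
rewrite V_upd; lra.
Qed.

Lemma x_bounds i j : 0 <= x i j <= 1.
Proof. by case: (Hx.1 i) => H _; apply: H. Qed.

Lemma sum_bounds i : 0 <= \sum_k x i k <= 1.
Proof.
case: (Hx.1 i) => H ->; rewrite andbT; apply: sumr_ge0 => k _.
by case/andP: (H k).
Qed.

Lemma vth i : vartheta G x i (x i).
Proof. exact: (Hx.2 i).1. Qed.

Lemma gpos i j s t : 0 < t -> 0 <= t + s -> t + s < omega G i j -> 0 < gfun i j s t.
Proof.
move=> t0 ts0 tsw; rewrite /gfun mulr_gt0 ?powR_gt0 //.
have [/andP[_ w1] Fw] := om i j.
by rewrite -Fw; apply: F_decr => //; rewrite ltW.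
Qed.

Lemma K1 i j : Aset G x i j -> 0 < x i j -> x i j + xTm x i j < omega G i j.
Proof.
move=> Aj xp; rewrite ltNge; apply/negP => wle.
have s0 : 0 <= (xTm x i j) := xTm_ge0 x i j Hx.1.
have [_ HA] := vth i; have /andP[_ xle] : 0 <= x i j <= omega G i j - (xTm x i j) := (HA j).1 Aj.
have xe : x i j + (xTm x i j) = omega G i j.
  apply/le_anti; rewrite wle andbT; lra.
have g0 : gfun i j (xTm x i j) (x i j) = 0 by rewrite /gfun xe (om i j).2 mulr0.
have /andP[_ x1] := x_bounds i j.
have /andP[sm0 sm1] := sum_bounds i.
have := @opt_upd i j (x i j / 2) Aj ltac:(lra) ltac:(lra) ltac:(lra) ltac:(lra).
rewrite g0; apply/negP; rewrite -ltNge; apply: gpos; lra.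
Qed.

Lemma s_lt1 i j : Aset G x i j -> 0 < x i j -> 0 < x i j + xTm x i j < 1.
Proof.
move=> Aj xp; have := @K1 i j Aj xp; have [/andP[_ w1] _] := om i j.
have := xTm_ge0 x i j Hx.1 => ? ?; apply/andP; split; lra.
Qed.

Lemma powRm1_gt0 i (z : R) : 0 < z -> 0 < z `^ (aexp G i - 1).
Proof. by move=> z0; rewrite powR_gt0. Qed.

Lemma K2 i j : Aset G x i j -> 0 < x i j -> 0 <= psi G i j (x i j) (xTm x i j).
Proof.
move=> Aj xp.
have [dg Dg] := @g_der i j _ _ xp (@s_lt1 i j Aj xp).
have := @left_max (gfun i j (xTm x i j)) 0 (x i j) xp dg.
have /andP[_ x1] := x_bounds i j.
have /andP[sm0 sm1] := sum_bounds i.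
have K := @K1 i j Aj xp.
rewrite Dg pmulr_rge0 ?powRm1_gt0 //; apply => t /andP[t0 tx].
apply: opt_upd => //; lra.
Qed.

Lemma K3 i j : Aset G x i j -> 0 < x i j -> \sum_k x i k < 1 ->
  psi G i j (x i j) (xTm x i j) = 0.
Proof.
move=> Aj xp sl.
have [dg Dg] := @g_der i j _ _ xp (@s_lt1 i j Aj xp).
have /andP[_ x1] := x_bounds i j.
have /andP[sm0 sm1] := sum_bounds i.
have K := @K1 i j Aj xp.
have s0 : 0 <= (xTm x i j) := xTm_ge0 x i j Hx.1.
have [/andP[w0 w1] _] := om i j.
set d := (omega G i j - (xTm x i j) - x i j) * (1 - \sum_k x i k).
have d0 : 0 < d by rewrite mulr_gt0 //; lra.
have d1 : d <= omega G i j - (xTm x i j) - x i j by rewrite /d ler_piMr; lra.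
have d2 : d <= 1 - \sum_k x i k by rewrite /d ler_piMl; lra.
have cab : x i j \in `]0, x i j + d[ by rewrite in_itv /=; apply/andP; split; lra.
have := @derive1_at_max _ (gfun i j (xTm x i j)) 0 (x i j + d) (x i j) ltac:(lra) _ cab.
case.
- move=> t; rewrite in_itv /= => /andP[t0 t1].
  have := @g_der i j (xTm x i j) t t0 ltac:(apply/andP; split; lra); by case.
- move=> t; rewrite in_itv /= => /andP[t0 t1].
  apply: opt_upd => //; lra.
move=> _ /eqP; rewrite Dg mulf_eq0 => /orP[|/eqP //].
by rewrite gt_eqF // powRm1_gt0.
Qed.

Lemma K4 i j : typeI G x i -> Aset G x i j -> x i j != 0.
Proof.
move=> [TI _] Aj; apply/negP => /eqP x0.
rewrite (@sumJ x i (vth i)) in TI.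
have s0 : 0 <= (xTm x i j) := xTm_ge0 x i j Hx.1.
have [/andP[w0 w1] _] := om i j.
have sw : (xTm x i j) < omega G i j by [].
have /andP[sm0 sm1] := sum_bounds i.
set d := (omega G i j - (xTm x i j)) * (1 - \sum_k x i k) / 2.
have d0 : 0 < d by rewrite /d !mulr_gt0 //; lra.
have d1 : d <= (omega G i j - (xTm x i j)) / 2.
  by rewrite /d; nra.
have d2 : d <= (1 - \sum_k x i k) / 2.
  by rewrite /d; nra.
have := @opt_upd i j d Aj ltac:(lra) ltac:(lra) ltac:(lra) ltac:(lra).
rewrite x0 {2}/gfun powR0 ?mul0r; last by have /andP[/lt0r_neq0 ? _] := a_pos i.
apply/negP; rewrite -ltNge; apply: gpos; lra.
Qed.

End GNEfacts.

Lemma psi_mono i j u1 u2 s1 s2 : 0 < u1 -> u1 < u2 -> 0 <= s1 ->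
  u1 + s1 <= u2 + s2 -> u2 + s2 < 1 -> psi G i j u2 s2 < psi G i j u1 s1.
Proof.
move=> u10 u12 s10 t12 t21.
rewrite /psi.
have h1 := @F'_decr i j (u1 + s1) (u2 + s2) ltac:(lra) t12 t21.
have [_ [h2 _]] := @F_der i j (u2 + s2) ltac:(apply/andP; split; lra).
have h3 : Ffun G i j (u2 + s2) <= Ffun G i j (u1 + s1).
  move: t12; rewrite le_eqVlt => /orP[/eqP -> //|t12].
  by apply/ltW/F_decr => //; lra.
have /andP[a0 _] := a_pos i.
nra.
Qed.
Lemma ypos (x : profile R n m) i j : GNE G x -> Jset G x i j -> 0 < x i j.
Proof.
move=> Hx /andP[_ nz]; have /andP[x0 _] := x_bounds x Hx i j.
by rewrite lt_def nz x0.
Qed.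

Section Main.
Variables x y : profile R n m.
Hypotheses (Hx : GNE G x) (Hy : GNE G y) (Hle : forall j, xT x j <= xT y j).

Lemma P1 i : typeI G x i -> forall j, Jset G y i j -> Jset G x i j.
Proof.
move=> TIx j Jy; have yp := ypos y _ _ Hy Jy.
move: (Jy) => /andP[Ay _].
have Ax : Aset G x i j.
  rewrite /Aset ltNge; apply/negP => wle.
  have x0 : x i j = 0 by apply: ((vth x Hx i).2 j).2; rewrite /Aset -leNgt.
  have := Hle j; rewrite (xT_split x i) (xT_split y i) x0.
  have := K1 y Hy i j Ay yp; lra.
by rewrite /Jset Ax (K4 x Hx i j TIx Ax).
Qed.

Lemma P2 i : typeI G x i -> typeI G y i.
Proof.
move=> TIx.
have sub j : Jset G y i j -> y i j <= x i j.
  move=> Jy; have Jx := @P1 i TIx j Jy.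
  have yp := ypos y _ _ Hy Jy; have xp := ypos x _ _ Hx Jx.
  have px := TIx.2 j Jx.
  move: (Jy) (Jx) => /andP[Ay _] /andP[Ax _].
  rewrite leNgt; apply/negP => xy.
  have := @psi_mono i j (x i j) (y i j) (xTm x i j) (xTm y i j) xp xy
    (xTm_ge0 x i j Hx.1).
  have := Hle j; rewrite (xT_split x i) (xT_split y i) => H.
  have /andP[_ H2] := s_lt1 y Hy i j Ay yp.
  move=> /(_ H H2); rewrite px.
  have := K2 y Hy i j Ay yp; lra.
have sl : \sum_(j | Jset G y i j) y i j < 1.
  apply: (le_lt_trans _ TIx.1).
  apply: (@le_trans _ _ (\sum_(j | Jset G y i j) x i j)); first exact: ler_sum.
  rewrite [leRHS]big_mkcond [leLHS]big_mkcond; apply: ler_sum => j _.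
  case Jy: (Jset G y i j); first by rewrite (@P1 i TIx j Jy).
  by case: (Jset G x i j) => //; have /andP[] := x_bounds x Hx i j.
split => // j Jy.
have yp := ypos y _ _ Hy Jy; move: (Jy) => /andP[Ay _].
apply: (K3 y Hy) => //.
by rewrite -(@sumJ y i (vth y Hy i)).
Qed.
End Main.
End Aux.

Theorem lemma6 (R : realType) (n m : nat) (G : game R n m) (x y : profile R n m) :
  game_assumptions G ->
  GNE G x -> GNE G y ->
  (forall j, xT x j <= xT y j) ->
  (forall i, TI G x i -> forall j, Jset G y i j -> Jset G x i j) /\
  TI G x `<=` TI G y.
Proof.
move=> HG Hx Hy Hle; split.
- by move=> i; exact: (@P1 R n m G HG x y Hx Hy Hle i).
- by move=> i; exact: (@P2 R n m G HG x y Hx Hy Hle i).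
Qed.
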